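(* Let $(X,\mu)$ be a non-atomic probability measure space, $\mathcal{T}$ a tree on $X$, $\mathcal{M}=\mathcal{M}_{\mathcal{T}}$ the associated maximal operator, and $p>1$. For $0<f\le F$ let $$B(f,F)=\sup\Big\{\|\mathcal{M}\phi\|_{p,\infty} : \phi\ge0,\ \int_X\phi\,d\mu=f,\ |||\phi|||_{p,\infty}=F\Big\}.$$ Then $B(f,F)=F$.
   Context: A tree on $(X,\mu)$ is a set $\mathcal{T}$ of measurable subsets of $X$ such that: (i) $X\in\mathcal{T}$ and $\mu(I)>0$ for every $I\in\mathcal{T}$; (ii) every $I\in\mathcal{T}$ has an associated finite subset $\mathcal{C}(I)\subseteq\mathcal{T}$ with at least two elements, whose elements are pairwise almost disjoint (i.e. intersections have measure zero) subsets of $I$ with union $I$; (iii) $\mathcal{T}=\bigcup_{m\ge0}\mathcal{T}_{(m)}$ where $\mathcal{T}_{(0)}=\{X\}$ and $\mathcal{T}_{(m+1)}=\bigcup_{I\in\mathcal{T}_{(m)}}\mathcal{C}(I)$; (iv) $\lim_{m\to\infty}\sup_{I\in\mathcal{T}_{(m)}}\mu(I)=0$. The associated maximal operator is $\mathcal{M}_{\mathcal{T}}\phi(x)=\sup\{\frac{1}{\mu(I)}\int_I|\phi|\,d\mu : x\in I\in\mathcal{T}\}$ for $\phi\in L^1(X,\mu)$. $\|g\|_{p,\infty}=\sup\{\lambda\,\mu(\{|g|>\lambda\})^{1/p}:\lambda>0\}$ and $|||\phi|||_{p,\infty}=\sup\{\mu(E)^{-1+1/p}\int_E|\phi|\,d\mu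 : E \text{ measurable}, \mu(E)>0\}$. *)

(* Defs.v *)
From HB Require Import structures.
From mathcomp Require Import all_boot all_order all_algebra.
From mathcomp Require Import all_classical all_reals all_analysis.
Set Implicit Arguments. Unset Strict Implicit. Unset Printing Implicit Defensive.
Import Order.TTheory GRing.Theory Num.Theory.
Local Open Scope classical_set_scope.
Local Open Scope ring_scope.

Section Defs.
Context {d : measure_display} {T : measurableType d} {R : realType}.

Definition nonatomic (mu : set T -> \bar R) : Prop :=
  forall A, measurable A -> (0 < mu A)%E ->
    exists B, [/\ measurable B, B `<=` A, (0 < mu B)%E & (mu B < mu A)%E].

Fixpoint tree_level (C : set T -> set (set T)) (m : nat) : set (set T) :=
  match m with
  | 0 => [set setT]
  | m'.+1 => \bigcup_(I in tree_level C m') C I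
  end.

Definition is_tree (mu : set T -> \bar R) (Tr : set (set T))
    (C : set T -> set (set T)) : Prop :=
  [/\ (Tr setT /\ forall I, Tr I -> measurable I /\ (0 < mu I)%E),
      (forall I, Tr I ->
         [/\ finite_set (C I), C I `<=` Tr,
             (exists J K, [/\ C I J, C I K & J <> K]),
             (forall J K, C I J -> C I K -> J <> K -> mu (J `&` K) = 0%E) &
             ((forall J, C I J -> J `<=` I) /\
              \bigcup_(J in C I) J = I)]),
      Tr = \bigcup_(m in [set: nat]) tree_level C m &
      (fun m => ereal_sup [set mu I | I in tree_level C m]) @ \oo --> 0%E].

Definition tree_maximal (mu : {measure set T -> \bar R}) (Tr : set (set T))
    (phi : T -> R) (x : T) : \bar R :=
  ereal_sup [set (((fine (mu I))^-1)%:E * \int[mu]_(y in I) (`|phi y|)%:E)%E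
            | I in [set I | Tr I /\ I x]].

Definition weak_norm (mu : set T -> \bar R) (p : R) (g : T -> \bar R) : \bar R :=
  ereal_sup [set (lambda * powR (fine (mu [set x | (lambda%:E < `|g x|)%E]))
                                 p^-1)%:E
            | lambda in [set lambda : R | 0 < lambda]].

Definition triple_norm (mu : {measure set T -> \bar R}) (p : R) (phi : T -> R)
    : \bar R :=
  ereal_sup [set ((powR (fine (mu E)) (-1 + p^-1))%:E
                 * \int[mu]_(x in E) (`|phi x|)%:E)%E
            | E in [set E | measurable E /\ (0 < mu E)%E]].

Definition bellmanB (mu : {measure set T -> \bar R}) (Tr : set (set T))
    (p f F : R) : \bar R :=
  ereal_sup [set weak_norm mu p (tree_maximal mu Tr phi)
            | phi in [set phi : T -> R |
                 [/\ mu.-integrable setT (EFin \o phi),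
                     (forall x, 0 <= phi x),
                     (\int[mu]_(x in setT) (phi x)%:E = f%:E)%E &
                     triple_norm mu p phi = F%:E]]].

End Defs.

(* Main.v *)
Require Import Defs.
From mathcomp Require Import all_boot all_order all_algebra.
From mathcomp Require Import all_classical all_reals all_analysis.
From mathcomp Require Import measurable_realfun ring lra.
Import Order.TTheory GRing.Theory Num.Theory.
Local Open Scope classical_set_scope.
Local Open Scope ring_scope.
Set Implicit Arguments. Unset Strict Implicit. Unset Printing Implicit Defensive.

Section Tree.
Context {d : measure_display} {T : measurableType d} {R : realType}.
Variables (mu : probability T R) (Tr : set (set T)) (C : set T -> set (set T)).
Hypothesis htree : is_tree mu Tr C.

Lemma lvl_Tr m I : tree_level C m I -> Tr I.
Proof. by case: htree => _ _ -> _ hI; exists m. Qed.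

Lemma Tr_lvl I : Tr I -> exists m, tree_level C m I.
Proof. by case: htree => _ _ E _; rewrite E => -[m _ h]; exists m. Qed.

Lemma Tr_meas I : Tr I -> measurable I.
Proof. by case: htree => -[_ h] _ _ _ /h[]. Qed.

Lemma Tr_pos I : Tr I -> (0 < mu I)%E.
Proof. by case: htree => -[_ h] _ _ _ /h[]. Qed.

Lemma TrT : Tr setT.
Proof. by case: htree => -[]. Qed.

Lemma child_Tr I J : Tr I -> C I J -> Tr J.
Proof. by case: htree => _ h _ _ /h[_ + _ _ _]; apply. Qed.

Lemma child_sub I J : Tr I -> C I J -> J `<=` I.
Proof. by case: htree => _ h _ _ /h[_ _ _ _ [+ _]]; apply. Qed.

Lemma lvl_parent m I : tree_level C m.+1 I -> exists2 P, tree_level C m P & C P I.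
Proof. by case=> P hP hI; exists P. Qed.

Lemma ancestor k m I : (k <= m)%N -> tree_level C m I ->
  exists2 A, tree_level C k A & I `<=` A.
Proof.
elim: m I => [|m IH] I.
  by rewrite leqn0 => /eqP -> hI; exists I.
rewrite leq_eqVlt => /orP[/eqP -> hI|hk]; first by exists I.
case/lvl_parent => P hP hIP.
have [A hA hPA] := IH P hk hP.
exists A => //; apply: subset_trans hPA.
exact: child_sub (lvl_Tr hP) hIP.
Qed.

Lemma lvl_disj m I J : tree_level C m I -> tree_level C m J -> I <> J ->
  mu (I `&` J) = 0%E.
Proof.
elim: m I J => [|m IH] I J; first by move=> -> ->.
case/lvl_parent => P hP hI; case/lvl_parent => Q hQ hJ IJ.
have [PQ|PQ] := pselect (P = Q).
  subst Q; case: htree => _ hch _ _.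
  by case: (hch P (lvl_Tr hP)) => _ _ _ hd _; apply: hd.
have := IH P Q hP hQ PQ.
apply: subset_measure0.
- by apply: measurableI; apply: Tr_meas; apply: child_Tr hI || apply: child_Tr hJ;
     apply: lvl_Tr; eassumption.
- by apply: measurableI; apply: Tr_meas; apply: lvl_Tr; eassumption.
- apply: setISS; [exact: child_sub (lvl_Tr hP) hI|exact: child_sub (lvl_Tr hQ) hJ].
Qed.

Lemma nest I J : Tr I -> Tr J -> [\/ I `<=` J, J `<=` I | mu (I `&` J) = 0%E].
Proof.
move=> TI TJ; have [m hI] := Tr_lvl TI; have [n hJ] := Tr_lvl TJ.
have mI := Tr_meas TI; have mJ := Tr_meas TJ.
case: (leqP m n) => mn.
  have [A hA JA] := ancestor mn hJ.
  have [<-|AI] := pselect (A = I); first by apply: Or32.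
  apply: Or33; have := lvl_disj hI hA (nesym AI).
  apply: subset_measure0; [exact: measurableI|apply: measurableI => //; exact: Tr_meas (lvl_Tr hA)|].
  exact: setIS.
have [A hA IA] := ancestor (ltnW mn) hI.
have [<-|AJ] := pselect (A = J); first by apply: Or31.
apply: Or33; have := lvl_disj hA hJ AJ.
apply: subset_measure0; [exact: measurableI|apply: measurableI => //; exact: Tr_meas (lvl_Tr hA)|].
exact: setSI.
Qed.

Lemma lvl_finite m : finite_set (tree_level C m).
Proof.
elim: m => [|m IH] /=; first exact: finite_set1.
apply: bigcup_finite => // I hI.
by case: htree => _ h _ _; case: (h I (lvl_Tr hI)).
Qed.

Lemma Tr_countable : countable Tr.
Proof.
case: htree => _ _ E _; rewrite E; apply: bigcup_countable => // m _.
exact: finite_set_countable (lvl_finite m).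
Qed.

Lemma Tr_enum : exists g : nat -> set T, Tr `<=` range g.
Proof.
have /pcard_surjP[g hg] := Tr_countable.
by exists g => I /hg [n _ <-]; exists n.
Qed.

End Tree.


Section Max.
Context {d : measure_display} {T : measurableType d} {R : realType}.
Variables (mu : probability T R) (Tr : set (set T)) (C : set T -> set (set T)).
Hypothesis htree : is_tree mu Tr C.
Variable phi : T -> R.
Hypothesis mphi : measurable_fun setT phi.

Definition avg (I : set T) : \bar R :=
  (((fine (mu I))^-1)%:E * \int[mu]_(y in I) (`|phi y|)%:E)%E.

Definition Gset (lam : R) := [set I | Tr I /\ (lam%:E < avg I)%E].

Definition Mx lam I := Gset lam I /\ forall J, Gset lam J -> I `<=` J -> J = I.

Lemma mabs D : measurable_fun D (fun y => (`|phi y|)%:E).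
Proof.
apply/measurable_EFinP; apply: measurableT_comp => //.
exact: measurable_funS mphi.
Qed.

Lemma G_max lam I : Gset lam I -> exists2 J, Mx lam J & I `<=` J.
Proof.
move=> GI; have [m hI] := Tr_lvl htree GI.1.
elim/ltn_ind: m I hI GI => m IH I hI GI.
have [MI|nMI] := pselect (Mx lam I); first by exists I.
have [J [GJ IJ JI]] : exists J, [/\ Gset lam J, I `<=` J & J <> I].
  apply: contrapT => hn; apply: nMI; split => // J GJ IJ.
  by apply: contrapT => JI; apply: hn; exists J.
have [k hJ] := Tr_lvl htree GJ.1.
case: (ltnP k m) => km.
  have [K MK JK] := IH k km J hJ GJ; exists K => //; exact: subset_trans IJ JK.
exfalso; have [A hA JA] := ancestor htree km hJ.
have [AI|AI] := pselect (A = I).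
  by subst A; apply: JI; apply/seteqP; split.
have := lvl_disj htree hI hA (nesym AI).
rewrite setIidl; last exact: subset_trans JA.
by move=> I0; have := Tr_pos htree GI.1; rewrite I0 ltxx.
Qed.

Lemma Mx_disj lam I J : Mx lam I -> Mx lam J -> I <> J -> mu (I `&` J) = 0%E.
Proof.
move=> MI MJ IJ; case: (nest htree MI.1.1 MJ.1.1) => // [sIJ|sJI].
  by exfalso; apply: IJ; rewrite (MI.2 J MJ.1 sIJ).
by exfalso; apply: IJ; rewrite (MJ.2 I MI.1 sJI).
Qed.


Variable lam : R.
Hypothesis lam0 : 0 < lam.
Variable g : nat -> set T.
Hypothesis hg : Tr `<=` range g.

Definition h (n : nat) : set T := if `[< Mx lam (g n) >] then g n else set0.

Lemma h_cases n : h n = set0 \/ (Mx lam (g n) /\ h n = g n).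
Proof. by rewrite /h; case: asboolP => M; [right|left]. Qed.

Lemma h_meas n : measurable (h n).
Proof. case: (h_cases n) => [->//|[M ->]].  apply: (Tr_meas htree); exact: M.1.1. Qed.

Lemma bigcup_h : \bigcup_n h n = \bigcup_(I in Gset lam) I.
Proof.
apply/seteqP; split => x.
  case=> n _; case: (h_cases n) => [-> []|[M ->] gx].
  by exists (g n) => //; exact: M.1.
case=> I GI Ix; have [J MJ IJ] := G_max GI.
have [n _ gn] := hg MJ.1.1.
exists n => //; rewrite /h asboolT; first by rewrite gn; exact: IJ.
by rewrite gn.
Qed.

Lemma hh_null n k : h n <> h k -> mu (h n `&` h k) = 0%E.
Proof.
case: (h_cases n) => [->|[Mn en]]; first by rewrite set0I measure0.
case: (h_cases k) => [->|[Mk ek]]; first by rewrite setI0 measure0.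
rewrite en ek => ne; exact: Mx_disj Mn Mk ne.
Qed.

Lemma union_null n : (forall k, (k < n)%N -> h k <> h n) ->
  mu (h n `&` \big[setU/set0]_(k < n) h k) = 0%E.
Proof.
move=> hne.
suff : forall m, (m <= n)%N -> mu (h n `&` \big[setU/set0]_(k < m) h k) = 0%E.
  by apply.
elim=> [|m IH] mn; first by rewrite big_ord0 setI0 measure0.
rewrite big_ord_recr /= setIUr.
apply/eqP; rewrite eq_le measure_ge0 andbT.
apply: le_trans (measureU2 _ _ _) _.
- apply: measurableI; first exact: h_meas.
  by apply: bigsetU_measurable => k _; exact: h_meas.
- by apply: measurableI; exact: h_meas.
have e2 : mu (h n `&` h m) = 0%E.
  by apply: hh_null => e; apply: (hne m mn); rewrite e.
rewrite [X in (X + _)%E](_ : _ = 0%E); last exact: IH (ltnW mn).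
by rewrite [X in (_ + X)%E](_ : _ = 0%E) ?adde0.
Qed.

Lemma key n : (lam%:E * mu (seqDU h n) <=
    \int[mu]_(x in seqDU h n) (`|phi x|)%:E)%E.
Proof.
rewrite /seqDU; set U := \big[setU/set0]_(k < n) h k.
have mU : measurable U by apply: bigsetU_measurable => k _; exact: h_meas.
case: (pselect (exists k, (k < n)%N /\ h k = h n)) => [[k [kn hk]]|nex].
  rewrite (_ : h n `\` U = set0); first by rewrite measure0 mule0 integral_set0.
  apply/seteqP; split => // x [hx]; apply; rewrite /U -bigcup_mkord.
  by exists k => //; rewrite hk.
have N0 : mu (h n `&` U) = 0%E.
  by apply: union_null => k kn e; apply: nex; exists k.
case: (h_cases n) => [->|[Mn en]].
  by rewrite set0D measure0 mule0 integral_set0.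
have mI := h_meas n.
rewrite measureD //; last first.
  by apply: le_lt_trans (probability_le1 _ mI) _; rewrite ltey.
rewrite [X in (_ - X)%E](_ : _ = 0%E) ?sube0; last exact: N0.
have -> : (\int[mu]_(x in h n `\` U) (`|phi x|)%:E =
    \int[mu]_(x in h n) (`|phi x|)%:E)%E.
  rewrite -{2}(setUIDK (h n) U) ge0_integral_setU //;
    try (by apply: measurableI); try (by apply: measurableD);
    try (by apply: mabs); try (by move=> x _; rewrite lee_fin).
  - rewrite [X in (X + _)%E]null_set_integral ?add0e //.
      exact: measurableI.
    exact: mabs.
  - by rewrite disj_set2E setDE setIACA setIid setICr setI0.
have := Mn.1.2; rewrite /avg -en.
have fin : mu (h n) \is a fin_num.
  rewrite ge0_fin_numE //; apply: le_lt_trans (probability_le1 _ mI) _.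
  by rewrite ltey.
have pos : (0 < fine (mu (h n)))%R.
  apply: fine_gt0; apply/andP; split; last by rewrite ltey_eq fin.
  by rewrite en; exact: (Tr_pos htree Mn.1.1).
rewrite lte_pdivlMl // (fineK fin) => /ltW.
by rewrite muleC.
Qed.

Lemma main_ineq : (lam%:E * mu (\bigcup_n h n) <=
    \int[mu]_(x in \bigcup_n h n) (`|phi x|)%:E)%E.
Proof.
have mD n : measurable (seqDU h n).
  apply: measurableD; first exact: h_meas.
  by apply: bigsetU_measurable => k _; exact: h_meas.
rewrite seqDU_bigcup_eq measure_semi_bigcup //; last by apply: bigcupT_measurable.
rewrite ge0_integral_bigcup //; try (by apply: mabs);
  try (by move=> x _; rewrite lee_fin); try (by apply: trivIset_seqDU).
rewrite -nneseriesZl //; apply: lee_nneseries => i _.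
  by rewrite mule_ge0 // lee_fin ltW.
exact: key.
Qed.

Lemma Mphi_ge0 x : (0 <= tree_maximal mu Tr phi x)%E.
Proof.
apply: le_trans (ereal_sup_ubound _); last first.
  by exists setT => //; split => //; exact: TrT htree.
by rewrite mule_ge0 // ?lee_fin ?invr_ge0 ?fine_ge0 // integral_ge0.
Qed.

Lemma level_eq : [set x | (lam%:E < `|tree_maximal mu Tr phi x|)%E] =
  \bigcup_n h n.
Proof.
rewrite bigcup_h; apply/seteqP; split => x /=.
  rewrite gee0_abs ?Mphi_ge0 // => /ereal_sup_gt[y [I [TI Ix] <-] ly].
  by exists I.
case=> I [TI lI] Ix; rewrite gee0_abs ?Mphi_ge0 //.
apply: lt_le_trans lI _; apply: ereal_sup_ubound; exists I => //.
Qed.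

Lemma weak_le (p : R) : 1 < p ->
  ((lam * powR (fine (mu [set x | (lam%:E < `|tree_maximal mu Tr phi x|)%E]))
     p^-1)%:E <= triple_norm mu p phi)%E.
Proof.
move=> p1; have p0 : 0 < p by apply: lt_trans p1.
rewrite level_eq; set S := \bigcup_n h n.
have mS : measurable S by apply: bigcupT_measurable => n; exact: h_meas.
have fin : mu S \is a fin_num.
  rewrite ge0_fin_numE //; apply: le_lt_trans (probability_le1 _ mS) _.
  by rewrite ltey.
have [S0|S0] := eqVneq (mu S) 0%E.
  rewrite S0 /= powR0 ?mulr0; last by rewrite invr_eq0 gt_eqF.
  have H : ((powR (fine (mu setT)) (-1 + p^-1))%:E *
      \int[mu]_(x in setT) (`|phi x|)%:E <= triple_norm mu p phi)%E.
    apply: ereal_sup_ubound; exists setT => //; split => //.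
    exact: (Tr_pos htree (TrT htree)).
  apply: le_trans H.
  by rewrite mule_ge0 // ?lee_fin ?powR_ge0 // integral_ge0.
have Spos : (0 < mu S)%E by rewrite lt_neqAle eq_sym S0 measure_ge0.
have tpos : 0 < fine (mu S) by apply: fine_gt0; rewrite Spos ltey_eq fin.
have H : ((powR (fine (mu S)) (-1 + p^-1))%:E *
      \int[mu]_(x in S) (`|phi x|)%:E <= triple_norm mu p phi)%E.
  by apply: ereal_sup_ubound; exists S.
apply: le_trans H.
have := main_ineq; rewrite -/S -(fineK fin) => mi.
have pge : (0 <= (powR (fine (mu S)) (-1 + p^-1))%:E)%E by rewrite lee_fin powR_ge0.
apply: le_trans (lee_wpmul2l pge mi).
have e : powR (fine (mu S)) (-1 + p^-1) * fine (mu S) = powR (fine (mu S)) p^-1.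
  rewrite -{2}(powRr1 (ltW tpos)) -powRD; last by rewrite (gt_eqF tpos) implybT.
  by rewrite addrAC addNr add0r.
by rewrite -!EFinM lee_fin mulrCA e.
Qed.

End Max.


Lemma concave_powR (R : realType) (q w a : R) : 0 < q <= 1 -> 0 <= w <= 1 -> 0 <= a ->
  w * a `^ q + (1 - w) <= (w * a + (1 - w)) `^ q.
Proof.
move=> /andP[q0 q1] /andP[w0 w1] a0.
have r1 : 1 <= q^-1 by rewrite invf_ge1.
have := @convex_powR R _ r1 (Itv01 w0 w1) (a `^ q) 1.
rewrite !inE /= !in_itv /= !andbT powR_ge0 ler01 => /(_ isT isT).
rewrite convRE [X in X `^ _ <= _]convRE /= /unstable.onem -powRrM mulfV ?gt_eqF // powRr1 // powR1 !mulr1.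
move=> H.
have := @ge0_ler_powR R q (ltW q0) _ _ _ _ H.
rewrite -powRrM mulVf ?gt_eqF // powRr1; last first.
  by rewrite addr_ge0 ?mulr_ge0 ?powR_ge0 ?subr_ge0.
apply; rewrite nnegrE ?powR_ge0 //.
by rewrite addr_ge0 ?mulr_ge0 ?subr_ge0.
Qed.

Lemma real_bound (R : realType) (p F f c b al t s : R) : 1 < p -> 0 < al < 1 ->
  0 < t <= 1 -> 0 <= s -> s <= t -> s <= al -> 0 <= b <= c ->
  c * al + b * (1 - al) = f -> f <= F ->
  c * al = F * powR al (1 - p^-1) -> c * powR al p^-1 = F ->
  powR t (-1 + p^-1) * (b * t + (c - b) * s) <= F.
Proof.
move=> p1 /andP[a0 a1] /andP[t0 t1] s0 st sa /andP[b0 bc] ef fF eca ecF.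
have p0 : 0 < p by apply: lt_trans p1.
have ip0 : 0 < p^-1 by rewrite invr_gt0.
have ip1 : p^-1 < 1 by rewrite invf_lt1.
set q := 1 - p^-1.
have q0 : 0 < q <= 1 by rewrite /q subr_gt0 ip1 /= lerBlDr lerDl ltW.
have E1 : powR t (-1 + p^-1) * powR t q = 1.
  rewrite -powRD; last by rewrite (gt_eqF t0) implybT.
  by rewrite (_ : -1 + p^-1 + q = 0) ?powRr0 // /q; ring.
have E2 : powR t (-1 + p^-1) * t = powR t p^-1.
  rewrite -{2}(powRr1 (ltW t0)) -powRD; last by rewrite (gt_eqF t0) implybT.
  by rewrite addrAC addNr add0r.
have P : 0 < powR t (-1 + p^-1) by rewrite powR_gt0.
have F0 : 0 <= F.
  by rewrite -ecF mulr_ge0 ?powR_ge0 // (le_trans b0).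
case: (leP t al) => ta.
  have h1 : b * t + (c - b) * s <= c * t by nra.
  apply: le_trans (ler_wpM2l (ltW P) h1) _.
  rewrite mulrCA E2 -ecF; apply: ler_wpM2l; first exact: le_trans bc.
  by apply: (ge0_ler_powR (ltW ip0)) => //; rewrite nnegrE; apply: ltW.
pose w := (1 - t) / (1 - al).
have w0 : 0 <= w <= 1.
  have d0 : 0 < 1 - al by rewrite subr_gt0.
  apply/andP; split; first by rewrite /w divr_ge0 // ?subr_ge0 // ltW.
  rewrite /w ler_pdivrMr // mul1r; lra.
have ew : w * (1 - al) = 1 - t by rewrite /w divfK // subr_eq0 gt_eqF.
have et : w * al + (1 - w) = t.
  have : w * al + (1 - w) = 1 - w * (1 - al) by ring.
  by rewrite ew => ->; ring.
have cv := concave_powR q0 w0 (ltW a0); rewrite et in cv.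
have h2 : b * t + (c - b) * s <= F * powR t q.
  apply: le_trans (ler_wpM2l F0 cv).
  have : F * (w * al `^ q + (1 - w)) = w * (c * al) + (1 - w) * F.
    by rewrite eca; ring.
  move=> ->.
  have wa : 0 <= 1 - w by rewrite subr_ge0; case/andP: w0.
  nra.
apply: le_trans (ler_wpM2l (ltW P) h2) _.
by rewrite mulrCA E1 mulr1.
Qed.

Section Witness.
Context {d : measure_display} {T : measurableType d} {R : realType}.
Variables (mu : probability T R) (Tr : set (set T)) (C : set T -> set (set T)).
Hypothesis htree : is_tree mu Tr C.
Variables (p f F : R).
Hypotheses (p1 : 1 < p) (f0 : 0 < f) (fF : f <= F).
Variable A : set T.
Hypothesis TA : Tr A.
Let al := fine (mu A).
Hypotheses (al1 : al < 1) (alq : powR al (1 - p^-1) <= f / F).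

Let c := F * powR al (- p^-1).
Let b := (f - c * al) / (1 - al).
Definition wphi (x : T) : R := b + (c - b) * \1_A x.

Let mA : measurable A := Tr_meas htree TA.

Lemma fin_mu E : measurable E -> mu E \is a fin_num.
Proof.
move=> mE; rewrite ge0_fin_numE //; apply: le_lt_trans (probability_le1 _ mE) _.
by rewrite ltey.
Qed.

Let muA : mu A = al%:E.
Proof. by rewrite /al fineK // fin_mu. Qed.

Let al0 : 0 < al.
Proof. by have := Tr_pos htree TA; rewrite muA lte_fin. Qed.

Let p0 : 0 < p. Proof. by apply: lt_trans p1. Qed.
Let F0 : 0 < F. Proof. by apply: lt_le_trans fF. Qed.

Let eca : c * al = F * powR al (1 - p^-1).
Proof.
rewrite /c -mulrA; congr (_ * _).
rewrite -{2}(powRr1 (ltW al0)) -powRD; last by rewrite (gt_eqF al0) implybT.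
by rewrite addrC.
Qed.

Let ecF : c * powR al p^-1 = F.
Proof.
rewrite /c -mulrA -powRD; last by rewrite (gt_eqF al0) implybT.
by rewrite addNr powRr0 mulr1.
Qed.

Let cF : F <= c.
Proof.
rewrite /c ler_peMr ?(ltW F0) //.
rewrite -(powRr0 al); apply: ger_powR; first by rewrite al0 ltW.
by rewrite oppr_le0 invr_ge0 ltW.
Qed.

Let ca_f : c * al <= f.
Proof.
rewrite eca; move: alq; rewrite ler_pdivlMr // => h.
by rewrite mulrC.
Qed.

Let b0 : 0 <= b.
Proof. by rewrite /b divr_ge0 // subr_ge0 // ltW. Qed.

Let bc : b <= c.
Proof.
rewrite /b ler_pdivrMr ?subr_gt0 //.
have : f <= c by apply: le_trans cF.
have : 0 < 1 - al by rewrite subr_gt0.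
nra.
Qed.

Let ef : c * al + b * (1 - al) = f.
Proof. by rewrite /b divfK ?subr_eq0 ?gt_eqF // addrC subrK. Qed.

Lemma wphi_ge0 x : 0 <= wphi x.
Proof. by rewrite /wphi addr_ge0 // mulr_ge0 ?subr_ge0 // indicE. Qed.

Lemma mwphi : measurable_fun setT wphi.
Proof.
apply: measurable_funD => //; apply: measurable_funM => //.
Qed.

Lemma int_wphi E : measurable E ->
  (\int[mu]_(x in E) (wphi x)%:E = b%:E * mu E + (c - b)%:E * mu (A `&` E))%E.
Proof.
move=> mE.
rewrite (eq_integral (fun x => (cst b%:E x + (c - b)%:E * (\1_A x)%:E)%E)); last first.
  by move=> x _; rewrite /wphi EFinD EFinM.
have mi : measurable_fun E (fun x => (\1_A x : R)%:E).
  by apply/measurable_EFinP; apply: measurable_funTS; exact: measurable_indic.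
rewrite ge0_integralD //.
- rewrite integral_cst // ge0_integralZl //; try (by rewrite lee_fin subr_ge0);
    try (by move=> x _; rewrite lee_fin indicE).
  by rewrite integral_indic.
- by move=> x _; rewrite mule_ge0 ?lee_fin ?subr_ge0 ?indicE.
- by apply: emeasurable_funM => //.
Qed.

Lemma abs_wphi x : `|wphi x| = wphi x.
Proof. exact: ger0_norm (wphi_ge0 x). Qed.

Lemma fine_mono E1 E2 : measurable E1 -> measurable E2 -> E1 `<=` E2 ->
  fine (mu E1) <= fine (mu E2).
Proof.
move=> m1 m2 s12; apply: fine_le; rewrite ?fin_mu //.
by rewrite le_measure // inE.
Qed.

Lemma tn_wphi : triple_norm mu p wphi = F%:E.
Proof.
apply/eqP; rewrite eq_le; apply/andP; split.
  apply: ge_ereal_sup => _ [E [mE Epos] <-].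
  under eq_integral do rewrite abs_wphi.
  have mAE : measurable (A `&` E) by exact: measurableI.
  rewrite int_wphi // -(fineK (fin_mu mE)) -(fineK (fin_mu mAE)).
  rewrite -!EFinM lee_fin.
  apply: real_bound p1 _ _ _ _ _ _ ef fF eca ecF.
  - by rewrite al0 al1.
  - apply/andP; split.
      by apply: fine_gt0; rewrite Epos ltey_eq fin_mu.
    have := fine_mono mE (measurableT) (@subsetT _ E).
    move/le_trans; apply.
    rewrite -[leRHS]/(fine 1%E); apply: fine_le; rewrite ?fin_mu //.
    exact: probability_le1.
  - exact: fine_ge0.
  - by apply: fine_mono => //; exact: subIsetr.
  - by rewrite -/al; apply: fine_mono => //; exact: subIsetl.
  - by rewrite b0 bc.
have H : ((powR (fine (mu A)) (-1 + p^-1))%:E *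
    \int[mu]_(x in A) (`|wphi x|)%:E <= triple_norm mu p wphi)%E.
  by apply: ereal_sup_ubound; exists A => //; split => //; apply: (Tr_pos htree).
apply: le_trans H; under eq_integral do rewrite abs_wphi.
rewrite int_wphi // setIid muA -/al -!EFinM lee_fin.
have -> : b * al + (c - b) * al = c * al by ring.
rewrite mulrCA -{2}(powRr1 (ltW al0)) -powRD; last by rewrite (gt_eqF al0) implybT.
by rewrite addrAC addNr add0r ecF.
Qed.

Lemma int_total : (\int[mu]_(x in setT) (wphi x)%:E = f%:E)%E.
Proof.
rewrite int_wphi // setIT muA probability_setT mule1 -EFinM -EFinD -ef.
by congr EFin; ring.
Qed.

Lemma integ_wphi : mu.-integrable setT (EFin \o wphi).
Proof.
apply/integrableP; split; first by apply/measurable_EFinP; exact: mwphi.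
under eq_integral do rewrite /= abs_wphi.
by rewrite int_total ltey.
Qed.

Lemma weak_ge : (F%:E <= weak_norm mu p (tree_maximal mu Tr wphi))%E.
Proof.
have [g hg] := Tr_enum htree.
have c0 : 0 < c by apply: lt_le_trans cF.
have avgA : avg mu wphi A = c%:E.
  rewrite /avg; under eq_integral do rewrite abs_wphi.
  rewrite int_wphi // setIid muA -/al -!EFinM; congr EFin.
  rewrite /= (_ : b * al + (c - b) * al = c * al); last by ring.
  by rewrite mulrC mulfK // gt_eqF.
rewrite -ecF; apply/lee_mul01Pr; first by rewrite lee_fin mulr_ge0 ?powR_ge0 ?ltW.
move=> r /andP[r0 r1].
have lam0 : 0 < r * c by rewrite mulr_gt0.
have lamc : r * c < c by rewrite gtr_pMl.
rewrite -EFinM mulrA.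
set S := [set x | ((r * c)%:E < `|tree_maximal mu Tr wphi x|)%E].
have H : ((r * c * powR (fine (mu S)) p^-1)%:E <=
    weak_norm mu p (tree_maximal mu Tr wphi))%E.
  by apply: ereal_sup_ubound; exists (r * c).
apply: le_trans H; rewrite lee_fin; apply: ler_wpM2l; first exact: ltW.
have eS : S = \bigcup_n h mu Tr wphi (r * c) g n by apply: (level_eq htree).
have mS : measurable S.
  by rewrite eS; apply: bigcupT_measurable => n; apply: (h_meas htree).
have ip0 : 0 < p^-1 by rewrite invr_gt0.
apply: (ge0_ler_powR (ltW ip0)); first by rewrite nnegrE ltW.
  by rewrite nnegrE fine_ge0.
apply: fine_mono => //.
rewrite eS (bigcup_h htree wphi (r * c) hg) => x Ax.
by exists A => //; split => //; rewrite avgA lte_fin.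
Qed.

End Witness.



Section Small.
Context {d : measure_display} {T : measurableType d} {R : realType}.
Variables (mu : probability T R) (Tr : set (set T)) (C : set T -> set (set T)).
Hypothesis htree : is_tree mu Tr C.

Lemma lvl_nonempty m : exists I, tree_level C m I.
Proof.
elim: m => [|m [I hI]]; first by exists setT.
case: htree => _ hch _ _.
have [_ _ [J [K [CJ _ _]]] _ _] := hch I (lvl_Tr htree hI).
by exists J; exists I.
Qed.

Lemma small_elem (delta : R) : 0 < delta -> exists A, Tr A /\ (mu A < delta%:E)%E.
Proof.
move=> d0; case: htree => _ _ _ H.
have nb : nbhs (0%R : R)%:E [set y : \bar R | (y < delta%:E)%E].
  apply/nbhs_EFin; apply/nbhs_ballP; exists delta => //= x.
  rewrite /ball /= sub0r normrN lte_fin => hx.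
  exact: le_lt_trans (ler_norm x) hx.
have [N _ hN] := H _ nb.
have [I hI] := lvl_nonempty N.
exists I; split; first apply: (lvl_Tr htree hI).
apply: le_lt_trans (hN N (leqnn N)).
by apply: ereal_sup_ubound; exists I.
Qed.

End Small.

Unset Implicit Arguments.

Theorem corollary3p2 (d : measure_display) (T : measurableType d)
    (R : realType) (mu : probability T R) (Tr : set (set T))
    (C : set T -> set (set T)) (p f F : R) :
  nonatomic mu -> is_tree mu Tr C -> 1 < p -> 0 < f -> f <= F ->
  bellmanB mu Tr p f F = F%:E.
Proof.
move=> _ ht p1 f0 fF.
have p0 : 0 < p by apply: lt_trans p1.
have F0 : 0 < F by apply: lt_le_trans fF.
apply/eqP; rewrite eq_le; apply/andP; split.
  apply: ge_ereal_sup => _ [phi [iphi _ _ tn] <-].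
  apply: ge_ereal_sup => _ [lam lam0 <-].
  have [g hg] := Tr_enum ht.
  have mphi : measurable_fun setT phi.
    by move/integrableP: iphi => [/measurable_EFinP].
  rewrite -tn; exact: (weak_le ht mphi lam0 hg p1).
set q := 1 - p^-1.
have ip1 : p^-1 < 1 by rewrite invf_lt1.
have q0 : 0 < q by rewrite /q subr_gt0.
have fF0 : 0 < f / F by rewrite divr_gt0.
have fF1 : f / F <= 1 by rewrite ler_pdivrMr // mul1r.
set delta := 2^-1 * powR (f / F) q^-1.
have d0 : 0 < delta by rewrite /delta mulr_gt0 ?invr_gt0 ?powR_gt0.
have dle : delta <= powR (f / F) q^-1.
  by rewrite /delta ler_pdivrMl // ler_peMl ?powR_ge0 // ler1n.
have iq0 : 0 < q^-1 by rewrite invr_gt0.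
have X1 : powR (f / F) q^-1 <= 1.
  have := @ge0_ler_powR R q^-1 (ltW iq0) (f / F) 1.
  rewrite powR1 /=; apply => //; rewrite nnegrE ?ltW //.
have d1 : delta < 1.
  rewrite /delta; apply: le_lt_trans (ler_wpM2l _ X1) _.
    by rewrite invr_ge0.
  by rewrite mulr1 invf_lt1 // ltr1n.
have [A [TA muA]] := small_elem ht d0.
have fA : mu A \is a fin_num by rewrite ge0_fin_numE // (lt_le_trans muA) ?leey.
have aldelta : fine (mu A) < delta by rewrite -lte_fin fineK.
have al1 : fine (mu A) < 1 by apply: lt_trans d1.
have alq : powR (fine (mu A)) (1 - p^-1) <= f / F.
  apply: (@le_trans _ _ (powR delta q)).
    apply: (ge0_ler_powR (ltW q0)); rewrite ?nnegrE ?fine_ge0 //.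
      exact: ltW.
    exact: ltW aldelta.
  apply: (@le_trans _ _ (powR (powR (f / F) q^-1) q)).
    apply: (ge0_ler_powR (ltW q0)) => //; rewrite nnegrE ?powR_ge0 //.
    exact: ltW.
  by rewrite -powRrM mulVf ?gt_eqF // powRr1 // ltW.
apply: le_trans (weak_ge ht p1 f0 fF TA al1 alq) _.
apply: ereal_sup_ubound; exists (wphi mu p f F A) => //; split.
- exact: (integ_wphi ht p1 f0 fF TA al1 alq).
- exact: (wphi_ge0 ht p1 f0 fF TA al1 alq).
- exact: (int_total ht p1 f0 fF TA al1 alq).
- exact: (tn_wphi ht p1 f0 fF TA al1 alq).
Qed.
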